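(* Let $G$ be a finite group and $\gamma$ a faithful $n$-dimensional complex representation of $G$ whose character $\chi_\gamma$ takes only rational values. Then for every prime $p>2n$, the Sylow $p$-subgroup of $K(\gamma)$ is trivial; i.e., every prime divisor of $|K(\gamma)|$ is at most $2n$.
   Context: Let $G$ be a finite group with irreducible complex characters $\chi_0,\chi_1,\dots,\chi_\ell$, where $\chi_0$ is the trivial character. For a faithful $n$-dimensional complex representation $\gamma$ of $G$ with character $\chi_\gamma$, let $M=(m_{ij})\in\mathbb{Z}^{(\ell+1)\times(\ell+1)}$ be defined by $\chi_\gamma\cdot\chi_i=\sum_{j=0}^{\ell}m_{ij}\chi_j$. The extended McKay–Cartan matrix is $\tilde C:=nI-M$, and the McKay–Cartan matrix $C$ is the $\ell\times\ell$ matrix obtained from $\tilde C$ by deleting the row and column indexed by $\chi_0$. The critical group of $\gamma$ is the finite abelian group $K(\gamma):=\operatorname{coker}(C^t:\mathbb{Z}^\ell\to\mathbb{Z}^\ell)$. *)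

(* Defs.v *)
From HB Require Import structures.
From mathcomp Require Import all_boot all_order all_algebra all_fingroup all_solvable all_field all_character.
Set Implicit Arguments. Unset Strict Implicit. Unset Printing Implicit Defensive.
Import Order.TTheory GRing.Theory Num.Theory.
Local Open Scope ring_scope.

Definition mckay_matrix_spec (gT : finGroupType) (G : {group gT})
    (chi : 'CF(G)) (M : 'M[int]_(Nirr G)) : Prop :=
  forall i : Iirr G, chi * 'chi_i = \sum_(j < Nirr G) (M i j)%:~R *: 'chi_j.

Definition ext_mckay_cartan (l n : nat) (M : 'M[int]_l.+1) : 'M[int]_l.+1 :=
  (n%:Z)%:M - M.

(* McKay-Cartan matrix: delete row and column 0 (indexed by the trivial character 'chi_0). *)
Definition mckay_cartan (l n : nat) (M : 'M[int]_l.+1) : 'M[int]_l :=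
  \matrix_(i < l, j < l) ext_mckay_cartan n M (lift ord0 i) (lift ord0 j).

(* Critical group K = coker(C^t : Z^l -> Z^l).  The image of C^t acting on
   column vectors x is {C^t x}, i.e. (transposing) the set of row vectors w *m C.
   An element of Z^l is zero in K iff it lies in this image. *)
Definition in_img_Ct (l : nat) (C : 'M[int]_l) (v : 'rV[int]_l) : Prop :=
  exists w : 'rV[int]_l, v = w *m C.

Definition coker_Ct_sylow_trivial (l : nat) (C : 'M[int]_l) (p : nat) : Prop :=
  forall (v : 'rV[int]_l) (k : nat),
    in_img_Ct C (((p ^ k)%N)%:Z *: v) -> in_img_Ct C v.

(* Main.v *)
Require Import Defs.
From HB Require Import structures.
From mathcomp Require Import all_boot all_order all_algebra all_fingroup all_solvable all_field all_character.
From mathcomp Require Import ring.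
Import Order.TTheory GRing.Theory Num.Theory.
Local Open Scope ring_scope.
Set Implicit Arguments. Unset Strict Implicit.

Definition chr (gT : finGroupType) (G : {group gT}) (w : 'rV[int]_(Nirr G)) : 'CF(G) :=
  \sum_i (w 0 i)%:~R *: 'chi_i.

Lemma bridge (gT : finGroupType) (G : {group gT}) (chi : 'CF(G)) (M : 'M[int]_(Nirr G))
  (n : nat) (HM : mckay_matrix_spec chi M) (w : 'rV[int]_(Nirr G)) :
  (n%:R - chi) * chr w = chr (w *m ext_mckay_cartan n M).
Proof.
rewrite /chr mulr_sumr.
transitivity (\sum_i \sum_j ((w 0 i * ext_mckay_cartan n M i j)%:~R *: 'chi[G]_j)).
  apply: eq_bigr => i _.
  rewrite -scalerAr mulrBl HM mulr_natl; symmetry.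
  under eq_bigr => j _ do rewrite intrM -scalerA.
  rewrite -scaler_sumr; congr (_ *: _).
  under eq_bigr => j _ do rewrite /ext_mckay_cartan !mxE intrB scalerBl.
  rewrite sumrB; congr (_ - _).
  rewrite (bigD1 i) //= big1 ?addr0; last first.
    by move=> j /negbTE; rewrite eq_sym => ->; rewrite mulr0n scale0r.
  by rewrite eqxx mulr1n scaler_nat.
rewrite exchange_big; apply: eq_bigr => j _.
by rewrite !mxE rmorph_sum scaler_suml.
Qed.

Lemma cfdot_chr (gT : finGroupType) (G : {group gT}) (w : 'rV[int]_(Nirr G)) k :
  '[chr w, 'chi_k] = (w 0 k)%:~R.
Proof.
rewrite /chr cfdot_suml (bigD1 k) //= big1 ?addr0.
  by rewrite cfdotZl cfdot_irr eqxx mulr1.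
by move=> j /negbTE Hj; rewrite cfdotZl cfdot_irr Hj mulr0.
Qed.

Lemma chr_coord (gT : finGroupType) (G : {group gT}) (phi : 'CF(G)) :
  phi \in 'Z[irr G]%g -> chr (\row_i Num.floor '[phi, 'chi_i]) = phi.
Proof.
move=> Hphi; rewrite [RHS]cfun_sum_cfdot /chr; apply: eq_bigr => i _.
by rewrite mxE floorK // Cint_cfdot_vchar_irr.
Qed.

Lemma prod_decomp (gT : finGroupType) (G : {group gT}) (theta : 'CF(G))
  (Ht : theta \in 'Z[irr G]%g) (c : seq algC) (Hc : all (fun x => x \is a Num.int) c) :
  exists2 H, H \in 'Z[irr G]%g &
    \prod_(x <- c) (theta - x *: 1) = (\prod_(x <- c) (- x)) *: 1 + theta * H.
Proof.
elim: c Hc => [|x c IH] /=.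
  by move=> _; exists 0; rewrite ?rpred0 // !big_nil scale1r mulr0 addr0.
case/andP=> Hx Hc'; have [H HZ HE] := IH Hc'.
exists ((\prod_(x <- c) (- x)) *: 1 + (theta - x *: 1) * H).
  rewrite rpredD ?scale_zchar ?cfun1_vchar ?mul_vchar ?rpredB ?scale_zchar ?cfun1_vchar //.
  by rewrite big_seq rpred_prod // => y Hy; rewrite rpredN; apply: (allP Hc').
rewrite !big_cons HE.
have ->: (- x * \prod_(x <- c) - x) *: (1 : 'CF(G)) = - ((x *: 1) * ((\prod_(x <- c) - x) *: 1)).
  by rewrite -scalerAl mul1r scalerA mulNr scaleNr.
set y := x *: (1 : 'CF(G)); set z := (\prod_(x <- c) - x) *: (1 : 'CF(G)).
ring.
Qed.

Lemma prod_val (gT : finGroupType) (G : {group gT}) (theta : 'CF(G)) (c : seq algC) g :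
  g \in G -> (\prod_(x <- c) (theta - x *: 1)) g = \prod_(x <- c) (theta g - x).
Proof.
move=> Hg; elim: c => [|x c IH]; first by rewrite !big_nil cfun1E Hg.
by rewrite !big_cons cfunE IH !cfunE cfun1E Hg mulr1.
Qed.

Lemma cfdot_Reg0 (gT : finGroupType) (G : {group gT}) : '[cfReg G, 'chi_0] = 1.
Proof.
rewrite cfReg_sum cfdot_suml (bigD1 0) //= big1 ?addr0.
  by rewrite cfdotZl cfdot_irr eqxx mulr1 irr0 cfun1E group1.
by move=> j /negbTE Hj; rewrite cfdotZl cfdot_irr Hj mulr0.
Qed.
Theorem corollary2p4 (gT : finGroupType) (G : {group gT}) (n : nat)
    (rG : mx_representation algC G n)
    (Hfaithful : mx_faithful rG)
    (Hrat : forall g, g \in G -> cfRepr rG g \in Crat)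
    (M : 'M[int]_(Nirr G))
    (HM : mckay_matrix_spec (cfRepr rG) M)
    (p : nat) (Hp : prime p) (Hp2n : (2 * n < p)%N) :
  coker_Ct_sylow_trivial (mckay_cartan n M) p.
Proof.
move=> v k [w0 Hw0].
set chi := cfRepr rG in HM *.
set theta : 'CF(G) := n%:R - chi.
have chiC : chi \is a character by exact: cfRepr_char.
have chi1 : chi 1%g = n%:R by exact: cfRepr1.
have thZ : theta \in 'Z[irr G]%g.
  by rewrite rpredB ?char_vchar // rpredMn ?cfun1_char.
have thE g : g \in G -> theta g = n%:R - chi g.
  have Hn : (n%:R : 'CF(G)) = n%:R *: 1 by rewrite scaler_nat.
  by move=> Hg; rewrite /theta Hn !cfunE cfun1E Hg mulr1.
have thint g : theta g \is a Num.int.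
  case Hg: (g \in G); last by rewrite cfun0 ?Hg ?rpred0.
  rewrite thE // rpredB //; first by rewrite rpred_nat.
  exact: Cint_rat_Aint (Hrat g _) (Aint_char g chiC).
have thnz g : g \in G -> g != 1%g -> theta g != 0.
  move=> Hg Hg1; rewrite thE // subr_eq0; apply/negP => /eqP Heq.
  have Hker : g \in rker rG.
    by apply/rkerP; split=> //; apply: max_cfRepr_mx1 => //; rewrite cfRepr1 -Heq.
  by move: (subsetP Hfaithful g Hker); rewrite inE (negbTE Hg1).
have thle g : `|theta g| <= (2 * n)%:R.
  case Hg: (g \in G); last by rewrite cfun0 ?Hg ?normr0 ?ler0n.
  rewrite thE // (le_trans (ler_normB _ _)) // normr_nat natrM mulr2n mulrDl mul1r lerD2l.
  by rewrite -chi1 char1_ge_norm.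
set c := [seq theta g | g <- enum (G :\ 1%g)].
have cint : all (fun x => x \is a Num.int) c by apply/allP => x /mapP [g _ ->]; exact: thint.
have [H HZ HE] := prod_decomp thZ cint.
set e := \prod_(x <- c) - x.
set psi : 'CF(G) := \sum_j (v 0 j)%:~R *: 'chi_(lift ord0 j).
have psiZ : psi \in 'Z[irr G]%g.
  by rewrite rpred_sum // => j _; rewrite scale_zchar ?intr_int ?irr_vchar.
set psi0 := psi - psi 1%g *: 1.
have psi0Z : psi0 \in 'Z[irr G]%g.
  by rewrite rpredB // scale_zchar ?Cint_vchar1 ?cfun1_vchar.
have psi01 : psi0 1%g = 0.
  by rewrite /psi0 cfunE [X in _ + X]cfunE [X in _ - X]cfunE cfun1E group1 mulr1 subrr.
have Pzero : (\prod_(x <- c) (theta - x *: 1)) * psi0 = 0.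
  apply/cfunP => g; rewrite cfunE -(subrr (1 : 'CF(G))) [RHS]cfunE [X in _ = _ + X]cfunE subrr.
  case Hg: (g \in G); last by rewrite [psi0 g]cfun0 ?Hg ?mulr0.
  case: (eqVneq g 1%g) => [->|Hg1]; first by rewrite psi01 mulr0.
  rewrite prod_val //; apply/eqP; rewrite mulf_eq0; apply/orP; left.
  rewrite prodf_seq_eq0; apply/hasP; exists (theta g); last by rewrite subrr eqxx.
  by apply: map_f; rewrite mem_enum !inE Hg1 Hg.
have Hrel : theta * (H * psi0) = - (e *: psi0).
  move: Pzero; rewrite HE mulrDl -scalerAl mul1r mulrA => /eqP.
  by rewrite addrC addr_eq0 => /eqP.
set phi := H * psi0 - '[H * psi0, 'chi_0] *: cfReg G.
have phiZ : phi \in 'Z[irr G]%g.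
  rewrite rpredB ?mul_vchar // scale_zchar ?char_vchar ?cfReg_char //.
  by rewrite Cint_cfdot_vchar_irr ?mul_vchar.
have thReg : theta * cfReg G = 0.
  apply/cfunP => g; rewrite cfunE -(subrr (1 : 'CF(G))) [RHS]cfunE [X in _ = _ + X]cfunE subrr.
  rewrite cfRegE; case: eqP => [->|_]; last by rewrite mulr0n mulr0.
  by rewrite thE ?group1 // chi1 subrr mul0r.
have Hphi : theta * phi = - (e *: psi0).
  by rewrite mulrBr -scalerAr thReg scaler0 subr0 Hrel.
have phi0 : '[phi, 'chi_0] = 0.
  by rewrite cfdotBl cfdotZl cfdot_Reg0 mulr1 subrr.
set W := \row_i Num.floor '[phi, 'chi[G]_i].
have HW : chr W = phi by exact: chr_coord.
have W00 : W 0 0 = 0 by rewrite mxE phi0 floor0.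
have Hb := bridge n HM W.
rewrite HW Hphi in Hb.
set E := \prod_(x <- c) Num.floor (- x).
have eE : e = E%:~R.
  rewrite /E rmorph_prod /e big_seq [RHS]big_seq; apply: eq_bigr => x Hx.
  have Hx' : - x \is a Num.int by rewrite rpredN; apply: (allP cint).
  exact: (esym (floorK Hx')).
have HWC j : (W *m ext_mckay_cartan n M) 0 (lift ord0 j) = - E * v 0 j.
  apply: (@intr_inj algC); rewrite -cfdot_chr -Hb cfdotNl cfdotZl /psi0 cfdotBl cfdotZl.
  rewrite -irr0 cfdot_irr (negbTE (neq_lift _ _)) mulr0 subr0.
  rewrite /psi cfdot_suml (bigD1 j) //= big1 ?addr0 => [|i /negbTE Hij]; last first.
    by rewrite cfdotZl cfdot_irr (inj_eq lift_inj) Hij mulr0.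
  by rewrite cfdotZl cfdot_irr eqxx mulr1 eE intrM intrN mulNr.
have Himg : (- E) *: v = (\row_j W 0 (lift ord0 j)) *m mckay_cartan n M.
  apply/rowP => j; rewrite [LHS]mxE -HWC !mxE big_ord_recl W00 mul0r add0r.
  by apply: eq_bigr => i _; rewrite !mxE.
have cop : coprime p `|E|.
  have -> : `|E|%N = \prod_(x <- c) `|Num.floor (- x)|%N.
    by rewrite /E; elim: (c) => [|x s IH]; rewrite ?big_nil ?big_cons // abszM IH.
  rewrite prime_coprime //.
  rewrite Euclid_dvd_prod // big_has; apply/hasPn => x /mapP [g]; rewrite mem_enum !inE.
  case/andP=> Hg1 Hg ->.
  have Hx' : - theta g \is a Num.int by rewrite rpredN.
  have Ha : (`|Num.floor (- theta g)|%N)%:R = `|theta g| :> algC.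
    have := congr1 (fun z : algC => `|z|) (floorK Hx'); rewrite /= normrN => <-; rewrite natr_absz; exact: intr_norm.
  rewrite gtnNdvd //.
    rewrite lt0n; apply/eqP => H0; move: Ha; rewrite H0 => /esym/eqP.
    by rewrite normr_eq0 (negbTE (thnz g Hg Hg1)).
  apply: leq_ltn_trans Hp2n; rewrite -(ler_nat algC) Ha; exact: thle.
have [[u u'] /= Huu] : {uu : int * int | uu.1 * (- E) + uu.2 * (p ^ k)%N%:Z = 1}.
  have [u [u' Hu]] := Bezoutz (- E) (p ^ k)%N%:Z.
  exists (u, u'); rewrite /= Hu; apply/eqP.
  rewrite /gcdz abszN; change (coprime `|E| (p ^ k)).
  by apply: coprimeXr; rewrite coprime_sym.
exists (u *: (\row_j W 0 (lift ord0 j)) + u' *: w0).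
by rewrite mulmxDl -!scalemxAl -Himg -Hw0 !scalerA -scalerDl Huu scale1r.
Qed.
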